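(* Let $X$ and $Y$ be non-negative absolutely continuous random variables with $X\le_{disp}Y$. Then (A) $R^\alpha_\beta(X)\le R^\alpha_\beta(Y)$ if $\{\alpha<1,\ \beta\ge1\}$ or $\{\alpha>1,\ \beta\ge 1\}$; (B) $R^\alpha_\beta(X)\ge R^\alpha_\beta(Y)$ if $\{\alpha<1,\ \beta<1\}$ or $\{\alpha>1,\ \beta<1\}$, where $0<\alpha$, $\alpha\ne1$, $\beta>0$.
   Context: For a non-negative absolutely continuous random variable $X$ with PDF $f$, the Rényi information generating function is $R^\alpha_\beta(X)=\frac{1}{1-\alpha}\left(\int_0^\infty f^\alpha(x)\,dx\right)^{\beta-1}$ for $0<\alpha<\infty$, $\alpha\ne1$, $\beta>0$; all integrals are assumed finite. If $X,Y$ have PDFs $f,g$ and CDFs $F,G$, then $X$ is smaller than $Y$ in the dispersive order, $X\le_{disp}Y$, if $g(G^{-1}(u))\le f(F^{-1}(u))$ for all $u\in(0,1)$, where $F^{-1}(u)=\inf\{x:F(x)\ge u\}$. *)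

(* Defs.v *)
From HB Require Import structures.
From mathcomp Require Import all_boot all_order all_algebra.
From mathcomp Require Import all_classical all_reals all_analysis.
Set Implicit Arguments. Unset Strict Implicit. Unset Printing Implicit Defensive.
Import Order.TTheory GRing.Theory Num.Theory.
Import numFieldNormedType.Exports.
Local Open Scope classical_set_scope.
Local Open Scope ring_scope.

Definition is_pdf d (T : measurableType d) (R : realType) (P : probability T R)
  (X : {RV P >-> R}) (f : R -> R) : Prop :=
  [/\ measurable_fun setT f, (forall x, 0 <= f x) &
      forall A : set R, measurable A ->
        distribution P X A = (\int[lebesgue_measure]_(x in A) (f x)%:E)%E].

Definition cdfR d (T : measurableType d) (R : realType) (P : probability T R)
  (X : {RV P >-> R}) (x : R) : R := fine (cdf X x).

Definition qinv (R : realType) (F : R -> R) (u : R) : R := inf [set x | u <= F x].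

Definition disp_le d (T : measurableType d) (R : realType) (P : probability T R)
  (X Y : {RV P >-> R}) (f g : R -> R) : Prop :=
  forall u : R, 0 < u < 1 ->
    g (qinv (cdfR Y) u) <= f (qinv (cdfR X) u).

Definition int_pow (R : realType) (f : R -> R) (a : R) : \bar R :=
  (\int[lebesgue_measure]_(x in `[0%R, +oo[%classic) ((f x) `^ a)%R%:E)%E.

Definition renyi_igf (R : realType) (f : R -> R) (a b : R) : R :=
  (1 - a)^-1 * (fine (int_pow f a)) `^ (b - 1).

(* Main.v *)
Set Warnings "-all".
Require Import Defs.
From HB Require Import structures.
From mathcomp Require Import all_boot all_order all_algebra.
From mathcomp Require Import all_classical all_reals all_analysis.
From mathcomp Require Import measurable_realfun.
Import Order.TTheory GRing.Theory Num.Theory.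
Import numFieldNormedType.Exports.
Local Open Scope classical_set_scope.
Local Open Scope ring_scope.

Section toR.
Context (R : realType) (mu : {measure set R -> \bar R}).
Definition toR : set (measurableTypeR R) -> \bar R := mu.
Let toR0 : toR set0 = 0%E. Proof. exact: measure0. Qed.
Let toR_ge0 A : (0 <= toR A)%E. Proof. exact: measure_ge0. Qed.
Let toR_sa : semi_sigma_additive toR.
Proof. exact: (@measure_semi_sigma_additive _ _ _ mu). Qed.
HB.instance Definition _ := isMeasure.Build _ _ _ toR toR0 toR_ge0 toR_sa.
End toR.
Arguments toR {R}.

Section transfer.
Context (R : realType) d' (T' : measurableType d') (m : {measure set T' -> \bar R})
  (D : set T') (mD : measurable D) (phi : T' -> R) (mphi : measurable_fun setT phi)
  (w : T' -> R) (w0 : forall x, 0 <= w x) (mw : measurable_fun setT w)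
  (nu : {measure set R -> \bar R}).
Hypothesis Hnu : forall A, measurable A ->
  nu A = (\int[m]_(x in D) ((\1_A (phi x))%:E * (w x)%:E))%E.

Import HBNNSimple.

Lemma transfer (h : R -> \bar R) : (forall x, (0 <= h x)%E) -> measurable_fun setT h ->
  (\int[nu]_x h x = \int[m]_(x in D) (h (phi x) * (w x)%:E))%E.
Proof.
Local Open Scope ereal_scope.
move=> h0 mh; pose hn := nnsfun_approx measurableT mh.
have -> : \int[nu]_x h x = lim (\int[nu]_x (hn n x)%:E @[n --> \oo]).
  rewrite -monotone_convergence//=.
  - apply: eq_integral => x _; apply/esym/cvg_lim => //.
    exact: cvg_nnsfun_approx.
  - by move=> n; exact/measurable_EFinP/measurable_funTS.
  - by move=> n x _; rewrite lee_fin.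
  - by move=> x _ a b ab; rewrite lee_fin; exact/lefP/nd_nnsfun_approx.
have -> : \int[m]_(x in D) (h (phi x) * (w x)%:E) =
    lim (\int[m]_(x in D) ((hn n (phi x))%:E * (w x)%:E) @[n --> \oo]).
  rewrite -monotone_convergence//=.
  - apply: eq_integral => x _; apply/esym/cvg_lim => //.
    apply: cvgeZr => //; exact: (cvg_nnsfun_approx measurableT mh).
  - move=> n; apply/emeasurable_funM; apply/measurable_EFinP; apply/measurable_funTS => //.
    exact: measurableT_comp.
  - by move=> n x _; rewrite mule_ge0// lee_fin.
  - move=> x _ a b ab; rewrite lee_wpmul2r ?lee_fin//.
    exact/lefP/nd_nnsfun_approx.
suff suf n : \int[nu]_x (hn n x)%:E =
    \int[m]_(x in D) ((hn n (phi x))%:E * (w x)%:E).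
  by under eq_fun do rewrite suf.
have mI r : measurable (hn n @^-1` [set r]).
  exact: measurable_funPTI.
transitivity (\sum_(r \in range (hn n)) r%:E * nu (hn n @^-1` [set r])).
  under eq_integral do rewrite fimfunE -fsumEFin//.
  rewrite ge0_integral_fsum//; last 2 first.
  - by move=> r; apply/measurable_EFinP; apply: measurable_funM => //; exact: measurable_indic.
  - by move=> r x _; rewrite nnfun_muleindic_ge0.
  apply: eq_fsbigr => r _; rewrite integralZl_indic_nnsfun// integral_indic// setIT.
  done.
apply/esym; transitivity (\int[m]_(x in D) \sum_(r \in range (hn n))
    ((r * \1_(hn n @^-1` [set r]) (phi x))%:E * (w x)%:E)).
  apply: eq_integral => x _; rewrite fimfunE -fsumEFin// ge0_mule_fsuml// => r.
  by rewrite EFinM nnfun_muleindic_ge0.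
apply/esym.
rewrite ge0_integral_fsum//; last 2 first.
- move=> r; apply: emeasurable_funM; apply/measurable_EFinP; last exact: measurable_funTS.
  apply: measurable_funM => //; apply: measurable_funTS.
  exact: (measurableT_comp (measurable_indic _) mphi).
- move=> r x _; rewrite mule_ge0 ?lee_fin//; first by rewrite -lee_fin EFinM nnfun_muleindic_ge0.
apply: eq_fsbigr => r rhn; rewrite Hnu// -ge0_integralZl//.
- by apply: eq_integral => x _; rewrite EFinM muleA.
- apply: emeasurable_funM; apply/measurable_EFinP; last exact: measurable_funTS.
  apply: measurable_funTS.
  exact: (measurableT_comp (measurable_indic _) mphi).
- by move=> x _; rewrite mule_ge0 ?lee_fin.
- by move: rhn; rewrite inE => -[t _ <-]; rewrite lee_fin.
Qed.
End transfer.

Section quantile.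
Context d (T : measurableType d) (R : realType) (P : probability T R)
  (X : {RV P >-> R}) (f : R -> R).
Hypotheses (X0 : forall w, 0 <= X w) (pdf : is_pdf X f).

Local Notation F := (cdfR X).
Local Notation Q := (qinv (cdfR X)).

Lemma cdfRE x : (F x)%:E = cdf X x.
Proof. by rewrite /cdfR fineK// fin_num_measure. Qed.

Lemma F_nd : nondecreasing_fun F.
Proof. by move=> x y xy; rewrite -lee_fin !cdfRE cdf_nondecreasing. Qed.

Lemma F_ge0 x : 0 <= F x.
Proof. by rewrite -lee_fin cdfRE. Qed.

Lemma F_le1 x : F x <= 1.
Proof. by rewrite -lee_fin cdfRE cdf_le1. Qed.

Lemma F_neg x : x < 0 -> F x = 0.
Proof.
move=> x0; apply/EFin_inj; rewrite cdfRE /cdf /distribution /pushforward.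
rewrite [X in P X](_ : _ = set0) ?measure0//.
apply/seteqP; split => // w /=; rewrite in_itv/= => Xw.
by have := le_lt_trans (X0 w) (le_lt_trans Xw x0); rewrite ltxx.
Qed.

Lemma F_rc x : F y @[y --> x^'+] --> F x.
Proof.
apply: fine_cvg; rewrite cdfRE; exact: cdf_right_continuous.
Qed.

Lemma F_y1 : F y @[y --> +oo%R] --> (1:R).
Proof. exact/fine_cvg/cvg_cdfy1. Qed.

Let S u := [set x | u <= F x].

Lemma S_lb u : 0 < u -> lbound (S u) 0.
Proof.
move=> u0 x /=; rewrite leNgt; apply: contraL => /F_neg ->.
by rewrite -ltNge.
Qed.

Lemma S_ne u : u < 1 -> nonempty (S u).
Proof.
move=> u1; have [y /ltW uy] := filter_ex (cvgr_gt _ F_y1 _ u1).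
by exists y.
Qed.

Lemma Q_ge0 u : 0 < u < 1 -> 0 <= Q u.
Proof.
by case/andP => u0 u1; apply: lb_le_inf; [exact: S_ne|exact: S_lb].
Qed.

Lemma galois u x : 0 < u < 1 -> (Q u <= x) = (u <= F x).
Proof.
case/andP => u0 u1; apply/idP/idP => [Qx|uF]; last first.
  by apply: ge_inf => //; exists 0; exact: S_lb.
rewrite leNgt; apply/negP => Fu.
have [y [xy Fy]] : exists y, x < y /\ F y < u.
  apply: (@filter_ex _ (x^'+)); near=> y; split; near: y.
    exact: nbhs_right_gt.
  exact: (cvgr_lt _ (F_rc x) _ Fu).
have : y <= Q u.
  apply: lb_le_inf; first exact: S_ne.
  move=> z /= uz; rewrite leNgt; apply/negP => zy.
  by have := lt_le_trans Fy uz; rewrite ltNge F_nd// ltW.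
by move=> /(le_trans) /(_ Qx); rewrite leNgt xy.
Unshelve. all: by end_near.
Qed.


Let U : set R := `]0, 1[%classic.
Let mU : measurable U. Proof. exact: measurable_itv. Qed.

Lemma Q_nd u v : 0 < u < 1 -> 0 < v < 1 -> u <= v -> Q u <= Q v.
Proof.
move=> Hu Hv uv; rewrite galois//; apply: le_trans uv _; rewrite -galois//.
Qed.

Lemma mQ : measurable_fun U Q.
Proof.
apply: (measurability (@measurable_realfun.RGenCInfty.G R)) => [|/= _ [_] [r] -> <-].
  exact: measurable_realfun.RGenCInfty.measurableE.
apply: measurable_realfun.is_interval_measurable => s t [Us Qs] [Ut Qt] v /andP[sv vt].
have Uv : U v.
  move: Us Ut; rewrite /U /= !in_itv/= => /andP[s0 _] /andP[_ t1].
  by rewrite (lt_le_trans s0 sv) (le_lt_trans vt t1).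
split => //; move: Qs; rewrite /= !in_itv/= !andbT => Qs.
apply: (le_trans Qs); apply: Q_nd => //; by move: Us Uv; rewrite /U/= !in_itv.
Qed.

Definition Qp := Q \_ U.

Lemma mQp : measurable_fun setT Qp.
Proof. by apply/(measurable_restrictT _ mU); exact: mQ. Qed.

Definition qmu (A : set R) : \bar R := lebesgue_measure (Qp @^-1` A `&` U).

Let qmu0 : qmu set0 = 0%E.
Proof. by rewrite /qmu preimage_set0 set0I measure0. Qed.

Let qmu_ge0 A : (0 <= qmu A)%E.
Proof. by apply: measure_ge0. Qed.

Let mQpA A : measurable A -> measurable (Qp @^-1` A `&` U).
Proof.
move=> mA; apply: measurableI => //.
by rewrite -[X in measurable X]setTI; exact: mQp.
Qed.

Let qmu_sa : semi_sigma_additive qmu.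
Proof.
move=> G mG tG mUG; rewrite /qmu preimage_bigcup setI_bigcupl.
apply: measure_semi_sigma_additive.
- by move=> n; exact: mQpA.
- apply/trivIsetP => /= i j _ _ ij; rewrite setIACA setIid -preimage_setI.
  by move/trivIsetP : tG => /(_ _ _ _ _ ij) ->//; rewrite preimage_set0 set0I.
- by rewrite -setI_bigcupl -preimage_bigcup; exact: mQpA.
Qed.

HB.instance Definition _ := isMeasure.Build _ _ _ qmu qmu0 qmu_ge0 qmu_sa.

Lemma qmu_cdf x : qmu `]-oo, x] = (F x)%:E.
Proof.
rewrite /qmu.
have -> : Qp @^-1` `]-oo, x] `&` U = U `&` [set u | u <= F x].
  apply/seteqP; split => u [].
    move=> Qx Uu; split => //; move: Qx; rewrite /preimage /Qp /= patchE mem_set//.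
    by rewrite /= in_itv/= galois//; move: Uu; rewrite /U/= in_itv.
  move=> Uu /= uF; split => //.
  rewrite /preimage /Qp /= patchE mem_set// /= in_itv/= galois//.
have [F1|F1] := eqVneq (F x) 1.
  rewrite F1 (_ : _ `&` _ = U); first by rewrite lebesgue_measure_itv/= lte01 EFinN sube0.
  apply/seteqP; split => [u []//|u Uu]; split => //=.
  by move: Uu; rewrite /U/= in_itv/= => /andP[_ /ltW].
have Fx1 : F x < 1 by rewrite lt_neqAle F1 F_le1.
rewrite (_ : _ `&` _ = `]0, F x]%classic).
  rewrite lebesgue_measure_itv/= lte_fin; case: ifPn => [_|]; first by rewrite EFinN sube0.
  rewrite -leNgt => Fx0; congr (_%:E); apply/eqP; rewrite eq_le Fx0 F_ge0 //=.
apply/seteqP; split => u.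
  by rewrite /U/= !in_itv/= => -[/andP[-> _] ->].
rewrite /U/= !in_itv/= => /andP[u0 uF]; split => //.
by rewrite u0 (le_lt_trans uF Fx1).
Qed.


HB.instance Definition _ := isCumulative.Build R _ R (cdfR X) F_nd F_rc.

Lemma LS_eq (mu : {measure set R -> \bar R}) :
  (forall x, mu `]-oo, x]%classic = (F x)%:E) ->
  forall A, measurable A -> lebesgue_stieltjes_measure (cdfR X) A = mu A.
Proof.
move=> muE A mA; rewrite -/(toR mu A).
apply: lebesgue_stieltjes_measure_unique => [I [[a b]]/= _ <- | //].
rewrite /lebesgue_stieltjes_measure /measure_extension/=.
rewrite measurable_mu_extE/=; last exact: is_ocitv.
have [ab | ba] := leP a b; last first.
  by rewrite set_itv_ge ?wlength0 ?measure0// bnd_simp -leNgt ltW.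
rewrite wlength_itv_bnd// EFinB -!muE.
have : `]a, b]%classic = `]-oo, b] `\` `]-oo, a] => [|->].
  by rewrite -[RHS]setCK setCD setCitvl setUC -[LHS]setCK setCitv.
rewrite measureD ?setIidr//; first exact: subset_itvl.
by have := muE b; rewrite /toR/= => ->; rewrite ltry.
Qed.

Lemma law_qmu A : measurable A -> distribution P X A = qmu A.
Proof.
move=> mA; rewrite -(@LS_eq qmu qmu_cdf A mA).
by apply/esym; apply: (@LS_eq (distribution P X)) => // x; rewrite cdfRE.
Qed.


Let mf : measurable_fun setT f. Proof. by case: pdf. Qed.
Let f0 x : 0 <= f x. Proof. by case: pdf. Qed.
Let pf A : measurable A ->
  distribution P X A = (\int[lebesgue_measure]_(x in A) (f x)%:E)%E.
Proof. by case: pdf => _ _; apply. Qed.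

Lemma law_density (h : R -> \bar R) : (forall x, (0 <= h x)%E) ->
  measurable_fun setT h ->
  (\int[distribution P X]_x h x = \int[lebesgue_measure]_x (h x * (f x)%:E))%E.
Proof.
move=> h0 mh.
have mid : measurable_fun (setT : set (measurableTypeR R)) (idfun : _ -> R).
  by move=> _ B mB; rewrite setTI.
have mf' : measurable_fun (setT : set (measurableTypeR R)) f.
  by move=> _ B mB; exact: (mf measurableT B mB).
apply: (@transfer R _ (measurableTypeR R) lebesgue_measure setT measurableT idfun mid
  f f0 mf' (distribution P X)) => // A mA.
transitivity (\int[lebesgue_measure]_(x in A) (f x)%:E)%E; first exact: (pf A mA).
rewrite [LHS]integral_mkcond; apply: eq_integral => x _.
rewrite patchE indicE; case: ifPn => xA /=; by rewrite ?mul1e ?mul0e.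
Qed.

Lemma law_quantile (h : R -> \bar R) : (forall x, (0 <= h x)%E) ->
  measurable_fun setT h ->
  (\int[distribution P X]_x h x = \int[lebesgue_measure]_(u in U) h (Qp u))%E.
Proof.
move=> h0 mh.
rewrite (@transfer R _ _ lebesgue_measure U mU Qp mQp (cst 1) (fun=> ler01)
  (measurable_cst _) (distribution P X))//.
  by apply: eq_integral => u _; rewrite mule1.
move=> A mA; transitivity (qmu A); first exact: law_qmu.
rewrite /qmu -integral_indic//; last first.
  by rewrite -[X in measurable X]setTI; exact: mQp.
by apply: eq_integral => u _; rewrite mule1 /=.
Qed.

Lemma int_pow_quantile a : 0 < a ->
  int_pow f a = (\int[lebesgue_measure]_(u in U) ((f (Q u)) `^ (a - 1))%:E)%E.
Proof.
move=> a0.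
pose g := (fun x => (f x) `^ (a - 1)) \_ `[0, +oo[%classic.
have mD : measurable (`[0, +oo[%classic : set R) by exact: measurable_itv.
have mg : measurable_fun setT g.
  apply/(measurable_restrictT _ mD); apply: measurable_funTS.
  exact: (measurableT_comp (measurable_powR _) mf).
have g0 x : 0 <= g x by rewrite /g patchE; case: ifPn => // _; exact: powR_ge0.
transitivity (\int[distribution P X]_x (g x)%:E)%E.
  rewrite law_density//; last exact/measurable_EFinP.
  rewrite /int_pow [LHS]integral_mkcond; apply: eq_integral => x _.
  rewrite /g !patchE; case: ifPn => _ /=; last by rewrite mul0e.
  by rewrite -EFinM mulrC mulr_powRB1.
rewrite law_quantile//; last exact/measurable_EFinP.
apply: eq_integral => u /[!inE] Uu.
have Uu' : 0 < u < 1 by move: Uu; rewrite /U/= in_itv.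
rewrite /g /Qp !patchE (mem_set Uu) ifT//.
by rewrite inE/= in_itv/= andbT Q_ge0.
Qed.

Lemma int_pow_neq0 a : 0 < a -> int_pow f a != 0%E.
Proof.
move=> a0; apply/negP => /eqP H.
pose D := `[0, +oo[%classic : set R.
have mD : measurable D by exact: measurable_itv.
have mpf : measurable_fun D (fun x => ((f x) `^ a)%:E).
  apply/measurable_EFinP; apply: measurable_funTS.
  exact: (measurableT_comp (measurable_powR _) mf).
have Hae : ae_eq lebesgue_measure D (fun x => ((f x) `^ a)%:E) (cst 0%E).
  apply/(ae_eq_integral_abs lebesgue_measure mD mpf).1.
  under eq_integral do rewrite gee0_abs ?lee_fin ?powR_ge0//.
  exact: H.
have : distribution P X D = 0%E.
  transitivity (\int[lebesgue_measure]_(x in D) (f x)%:E)%E; first exact: pf.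
  transitivity (\int[lebesgue_measure]_(x in D) (cst 0%E x))%E; last first.
    by rewrite integral0.
  apply: ae_eq_integral => //.
    by apply/measurable_EFinP; exact: measurable_funTS.
  apply: filterS Hae => x /= H1 Dx.
  have H3 : (f x) `^ a = 0 by apply: EFin_inj; exact: H1.
  by rewrite (@powR_eq0_eq0 _ _ _ H3).
rewrite /distribution /pushforward (_ : X @^-1` D = setT) ?probability_setT//.
  by move/eqP; rewrite onee_eq0.
apply/seteqP; split => // w _; rewrite /D /= in_itv/= andbT; exact: X0.
Qed.

Lemma null_zero :
  lebesgue_measure (U `&` [set u | f (Q u) = 0]) = 0%E.
Proof.
have m0 : measurable (f @^-1` [set 0]).
  by rewrite -[X in measurable X]setTI; apply: mf => //; exact: measurable_set1.
have -> : U `&` [set u | f (Q u) = 0] = Qp @^-1` (f @^-1` [set 0]) `&` U.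
  apply/seteqP; split => u [] H1 H2; split => //=.
    by rewrite /Qp patchE (mem_set H1).
  by move: H1; rewrite /Qp/= patchE (mem_set H2).
transitivity (qmu (f @^-1` [set 0%R])) => //.
rewrite -law_qmu//.
transitivity (\int[lebesgue_measure]_(x in f @^-1` [set 0%R]) (f x)%:E)%E.
  exact: pf.
by apply: integral0_eq => x /= ->.
Qed.

End quantile.
Arguments mQ {d T R P X}.
Arguments int_pow_quantile {d T R P X f} X0 pdf {a}.
Arguments int_pow_neq0 {d T R P X f} X0 pdf {a}.
Arguments null_zero {d T R P X f} X0 pdf.

Lemma powR_anti (R : realType) (x y e : R) :
  0 < x -> x <= y -> e <= 0 -> y `^ e <= x `^ e.
Proof.
move=> x0 xy e0; have y0 : 0 < y by exact: lt_le_trans xy.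
have E z : z `^ e = (z `^ (- e))^-1 by rewrite -powRN opprK.
rewrite (E x) (E y) lef_pV2 ?posrE ?powR_gt0//.
apply: ge0_ler_powR => //; [by rewrite oppr_ge0|by rewrite nnegrE ltW|by rewrite nnegrE ltW].
Qed.

Lemma meas_phi d (T : measurableType d) (R : realType) (P : probability T R)
  (X : {RV P >-> R}) (f : R -> R) (a : R) :
  (forall w, 0 <= X w) -> is_pdf X f ->
  measurable_fun (`]0, 1[%classic : set R)
    (fun u => ((f (qinv (cdfR X) u)) `^ a)%:E).
Proof.
move=> X0 [mf _ _]; apply/measurable_EFinP.
apply: (measurableT_comp (measurable_powR _)).
exact: (measurableT_comp mf (mQ X0)).
Qed.

Theorem proposition2p5 (d : measure_display) (T : measurableType d)
  (R : realType) (P : probability T R) (X Y : {RV P >-> R}) (f g : R -> R)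
  (a b : R) :
  (forall w, 0 <= X w) -> (forall w, 0 <= Y w) ->
  is_pdf X f -> is_pdf Y g ->
  0 < a -> a != 1 -> 0 < b ->
  (int_pow f a < +oo)%E -> (int_pow g a < +oo)%E ->
  disp_le X Y f g ->
  (((a < 1 /\ 1 <= b) \/ (1 < a /\ 1 <= b)) ->
     renyi_igf f a b <= renyi_igf g a b) /\
  (((a < 1 /\ b < 1) \/ (1 < a /\ b < 1)) ->
     renyi_igf g a b <= renyi_igf f a b).
Proof.
move=> X0 Y0 pX pY a0 a1 b0 finf fing disp.
have mU : measurable (`]0, 1[%classic : set R) by exact: measurable_itv.
have f0 x : 0 <= f x by case: pX.
have g0 x : 0 <= g x by case: pY.
have Ige0 (h : R -> R) : (0 <= int_pow h a)%E.
  by apply: integral_ge0 => x _; rewrite lee_fin powR_ge0.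
have Ifin (h : R -> R) : (int_pow h a < +oo)%E -> int_pow h a \is a fin_num.
  by move=> H; rewrite ge0_fin_numE.
have Ipos (h : R -> R) (Z : {RV P >-> R}) : (forall w, 0 <= Z w) -> is_pdf Z h ->
    (int_pow h a < +oo)%E -> 0 < fine (int_pow h a).
  move=> Z0 pZ H; apply: fine_gt0; rewrite H andbT lt_neqAle Ige0 andbT.
  by rewrite eq_sym; exact: (int_pow_neq0 Z0 pZ a0).
have Ifpos := Ipos f X X0 pX finf.
have Igpos := Ipos g Y Y0 pY fing.
have cmp1 : 1 < a -> fine (int_pow g a) <= fine (int_pow f a).
  move=> a1'; apply: fine_le; [exact: Ifin|exact: Ifin|].
  rewrite (int_pow_quantile Y0 pY a0) (int_pow_quantile X0 pX a0).
  apply: ge0_le_integral => //.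
  - by move=> u _; rewrite lee_fin powR_ge0.
  - exact: meas_phi.
  - exact: meas_phi.
  move=> u; rewrite /= in_itv/= => Uu; rewrite lee_fin.
  apply: ge0_ler_powR => //; [by rewrite subr_ge0 ltW|by rewrite nnegrE|by rewrite nnegrE|].
  exact: disp.
have cmp2 : a < 1 -> fine (int_pow f a) <= fine (int_pow g a).
  move=> a1'; apply: fine_le; [exact: Ifin|exact: Ifin|].
  rewrite (int_pow_quantile Y0 pY a0) (int_pow_quantile X0 pX a0).
  apply: ae_ge0_le_integral => //.
  - by move=> u _; rewrite lee_fin powR_ge0.
  - exact: meas_phi.
  - by move=> u _; rewrite lee_fin powR_ge0.
  - exact: meas_phi.
  exists (`]0, 1[%classic `&` [set u | g (qinv (cdfR Y) u) = 0]); split.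
  - have := @meas_phi _ _ _ P Y g 1 Y0 pY.
    move=> /measurable_EFinP mh.
    have := mh mU [set 0] (measurable_set1 0).
    congr measurable; apply/seteqP; split => u [Uu /= H]; split => //.
      by move: H; rewrite powRr1//; move=> ->.
    by rewrite H powRr1.
  - exact: (null_zero Y0 pY).
  move=> u /= /not_implyP [Uu /negP H]; split => //.
  apply/eqP; apply: contraNT H => gn0.
  have gpos : 0 < g (qinv (cdfR Y) u) by rewrite lt_neqAle eq_sym gn0 g0.
  rewrite lee_fin; apply: powR_anti => //.
  - by move: Uu; rewrite /= in_itv/=; exact: disp.
  - by rewrite subr_le0 ltW.
set If := fine (int_pow f a); set Ig := fine (int_pow g a).
rewrite /renyi_igf -/If -/Ig.
have cpos : a < 1 -> 0 <= (1 - a)^-1 by move=> ?; rewrite invr_ge0 subr_ge0 ltW.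
have cneg : 1 < a -> (1 - a)^-1 <= 0 by move=> ?; rewrite invr_le0 subr_le0 ltW.
split.
- case=> -[aa bb].
  + apply: ler_wpM2l; first exact: cpos.
    apply: ge0_ler_powR; [by rewrite subr_ge0|by rewrite nnegrE; exact: ltW|by rewrite nnegrE; exact: ltW|exact: cmp2].
  + apply: ler_wnM2l; first exact: cneg.
    apply: ge0_ler_powR; [by rewrite subr_ge0|by rewrite nnegrE; exact: ltW|by rewrite nnegrE; exact: ltW|exact: cmp1].
- case=> -[aa bb].
  + apply: ler_wpM2l; first exact: cpos.
    apply: powR_anti => //; [exact: cmp2|by rewrite subr_le0 ltW].
  + apply: ler_wnM2l; first exact: cneg.
    apply: powR_anti => //; [exact: cmp1|by rewrite subr_le0 ltW].
Qed.
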